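(* Let $L$ be a finite-dimensional Lie algebra over a field $F$. Then $L$ is two-generated if and only if $L/\phi(L)$ is two-generated.
   Context: All Lie algebras are finite-dimensional over an arbitrary field $F$. A Lie algebra is two-generated if it is generated as a Lie algebra by two of its elements. The Frattini subalgebra $F(L)$ of $L$ is the intersection of all maximal subalgebras of $L$, and the Frattini ideal $\phi(L)$ is the largest ideal of $L$ contained in $F(L)$. *)

(* Defs.v *)
From HB Require Import structures.
From mathcomp Require Import all_boot all_order all_algebra.
Set Implicit Arguments. Unset Strict Implicit. Unset Printing Implicit Defensive.
Import GRing.Theory.
Local Open Scope ring_scope.


Definition lie_bracket (F : fieldType) (L : vectType F) (br : L -> L -> L) : Prop :=
  [/\ (forall (a : F) (x y z : L), br (a *: x + y) z = a *: br x z + br y z),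
      (forall (a : F) (x y z : L), br z (a *: x + y) = a *: br z x + br z y),
      (forall x : L, br x x = 0) &
      (forall x y z : L, br x (br y z) + br y (br z x) + br z (br x y) = 0)].

Definition subalg (F : fieldType) (L : vectType F) (br : L -> L -> L)
  (U : {vspace L}) : Prop :=
  forall u v, u \in U -> v \in U -> br u v \in U.

Definition lie_ideal (F : fieldType) (L : vectType F) (br : L -> L -> L)
  (I : {vspace L}) : Prop :=
  forall u v, u \in I -> br u v \in I.

Definition maximal_subalg (F : fieldType) (L : vectType F) (br : L -> L -> L)
  (U : {vspace L}) : Prop :=
  [/\ subalg br U, U != fullv &
      forall V : {vspace L}, subalg br V -> (U <= V)%VS -> V = U \/ V = fullv].

(* Frattini subalgebra F(L): intersection of all maximal subalgebras
   (as a predicate on L; it is L itself if there are none). *)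
Definition frattini_sub (F : fieldType) (L : vectType F) (br : L -> L -> L)
  (x : L) : Prop :=
  forall U : {vspace L}, maximal_subalg br U -> x \in U.

Definition is_frattini_ideal (F : fieldType) (L : vectType F) (br : L -> L -> L)
  (I : {vspace L}) : Prop :=
  [/\ lie_ideal br I,
      (forall x, x \in I -> frattini_sub br x) &
      forall J : {vspace L}, lie_ideal br J ->
        (forall x, x \in J -> frattini_sub br x) -> (J <= I)%VS].

Definition two_generated (F : fieldType) (L : vectType F) (br : L -> L -> L) : Prop :=
  exists x y : L, forall U : {vspace L}, subalg br U -> x \in U -> y \in U -> U = fullv.

Definition lie_hom (F : fieldType) (L M : vectType F) (brL : L -> L -> L)
  (brM : M -> M -> M) (f : 'Hom(L, M)) : Prop :=
  forall x y, f (brL x y) = brM (f x) (f y).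

(* Main.v *)
Require Import Defs.
From mathcomp Require Import all_boot all_order all_algebra.
From mathcomp Require Import zify.
From Stdlib Require Import Classical.
Import GRing.Theory.
Local Open Scope ring_scope.

Lemma exists_max (F : fieldType) (L : vectType F) (br : L -> L -> L) (n : nat) :
  forall U : {vspace L}, (\dim (fullv : {vspace L}) - \dim U < n)%N ->
    subalg br U -> U != fullv ->
    exists V, maximal_subalg br V /\ (U <= V)%VS.
Proof.
elim: n => [//|n IH] U hn sU nU.
case: (classic (maximal_subalg br U)) => [mU|nmU]; first by exists U; split.
have [V [sV [UV [nVU nVf]]]] : exists V : {vspace L},
    subalg br V /\ (U <= V)%VS /\ V <> U /\ V <> fullv.
  apply: NNPP => hne; apply: nmU; split => // V sV UV.
  case: (classic (V = U)) => [->|h1]; first by left.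
  case: (classic (V = fullv)) => [->|h2]; first by right.
  by exfalso; apply: hne; exists V.
have lt : (\dim U < \dim V)%N.
  case: (dimv_leqif_eq UV) => _ eq; rewrite ltn_neqAle (dimvS UV) andbT eq.
  by apply/eqP => e; apply: nVU; rewrite e.
have le : (\dim V <= \dim (fullv : {vspace L}))%N by apply: dimvS; apply: subvf.
have [W [mW VW]] : exists W, maximal_subalg br W /\ (V <= W)%VS.
  apply: IH => //; first by lia.
  by apply/eqP.
by exists W; split => //; apply: subv_trans UV VW.
Qed.

Theorem lemma2p1 (F : fieldType) (L : vectType F) (br : L -> L -> L)
  (hL : lie_bracket br) (Phi : {vspace L}) (hPhi : is_frattini_ideal br Phi)
  (M : vectType F) (brM : M -> M -> M) (hM : lie_bracket brM)
  (f : 'Hom(L, M)) (hf : lie_hom br brM f) (fsurj : limg f = fullv)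
  (fker : lker f = Phi) :
  two_generated br <-> two_generated brM.
Proof.
split.
- move=> [x [y H]]; exists (f x), (f y) => U sU xU yU.
  have pre : (f @^-1: U)%VS = fullv.
    apply: H; rewrite -?memv_preim //.
    by move=> u v; rewrite -!memv_preim hf; apply: sU.
  apply: subv_anti; rewrite subvf /= -fsurj.
  apply/subvP => w /memv_imgP [u _ ->].
  by rewrite memv_preim pre memvf.
- move=> [x [y H]].
  have [a _ ea] : exists2 a, a \in (fullv : {vspace L}) & x = f a.
    by apply/memv_imgP; rewrite fsurj memvf.
  have [b _ eb] : exists2 b, b \in (fullv : {vspace L}) & y = f b.
    by apply/memv_imgP; rewrite fsurj memvf.
  exists a, b => U sU aU bU.
  have img : (f @: U)%VS = fullv.
    apply: H; rewrite ?ea ?eb ?memv_img //.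
    move=> u' v' /memv_imgP [u uU ->] /memv_imgP [v vU ->].
    by rewrite -hf; apply: memv_img; apply: sU.
  case: (eqVneq U fullv) => // nU.
  have [V [mV UV]] := @exists_max _ _ br _ U (leqnn (\dim (fullv : {vspace L}) - \dim U).+1) sU nU.
  have mV0 := mV; case: mV => sV nV _.
  exfalso; move/negP: nV; apply; apply/eqP.
  apply: subv_anti; rewrite subvf /=.
  apply/subvP => z _.
  have [u uU ez] : exists2 u, u \in U & f z = f u.
    by apply/memv_imgP; rewrite img memvf.
  have zu : z - u \in Phi.
    by rewrite -fker memv_ker linearB /= ez subrr.
  have : z - u \in V.
    by case: hPhi => _ hfr _; apply: (hfr _ zu).
  move=> zuV.
  have uV : u \in V by apply: (subvP UV).
  by rewrite -(subrK u z); apply: rpredD.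
Qed.
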